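(* Let $S:\mathbb{R}^m\times\mathbb{R}^n\to\mathbb{R}^q$ be a bilinear map with lifted linear operator $\mathscr{S}$, let $\mathcal{K}\subseteq\mathbb{R}^m\times\mathbb{R}^n$, let $\mathcal{K}'\subseteq\mathbb{R}^{m\times n}$ satisfy $\mathcal{K}'\cap\{W:\operatorname{rank}(W)\le1\}=\{xy^T:(x,y)\in\mathcal{K}\}$, and let $\mathcal{M}=\mathcal{K}'-\mathcal{K}'$. Assume $\mathcal{N}(\mathscr{S},1)\cap\mathcal{M}=\{0\}$. Let $\mathbf{M}=\sigma uv^T\in\mathcal{K}'$ be a rank one matrix ($\sigma>0$, $\|u\|_2=\|v\|_2=1$). Suppose that for every $X\in\mathcal{N}(\mathscr{S},2)\cap\mathcal{M}\setminus\{0\}$ either $u\notin\mathcal{C}(X)$ or $v\notin\mathcal{R}(X)$. Then, given $z=\mathscr{S}(\mathbf{M})$, $\mathbf{M}$ is successfully recovered by solving ''minimize $\operatorname{rank}(W)$ subject to $\mathscr{S}(W)=z$, $W\in\mathcal{K}'$'', i.e. $\mathbf{M}$ is its unique optimal solution.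
   Context: A map is bilinear if linear in each argument separately. For $j=1,\dots,q$ let $S_j$ be the unique matrix with $(S(x,y))_j=x^TS_jy$; the lifted operator is $(\mathscr{S}(W))_j=\operatorname{tr}(S_j^TW)$. $\mathcal{N}(\mathscr{S},k)=\{X:\operatorname{rank}(X)\le k,\ \mathscr{S}(X)=0\}$. $\mathcal{K}'-\mathcal{K}'=\{X_1-X_2:X_1,X_2\in\mathcal{K}'\}$. $\mathcal{C}(X)$ and $\mathcal{R}(X)$ denote the column space and row space of $X$. *)

(* Defs.v *)
From HB Require Import structures.
From mathcomp Require Import all_boot all_order all_algebra.
Set Implicit Arguments. Unset Strict Implicit. Unset Printing Implicit Defensive.
Import Order.TTheory GRing.Theory Num.Theory.
Local Open Scope ring_scope.

Definition bilinear_map (R : rcfType) (m n q : nat)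
  (S : 'cV[R]_m -> 'cV[R]_n -> 'cV[R]_q) : Prop :=
  (forall (a : R) x1 x2 y, S (a *: x1 + x2) y = a *: S x1 y + S x2 y) /\
  (forall (a : R) x y1 y2, S x (a *: y1 + y2) = a *: S x y1 + S x y2).

Definition evec (R : rcfType) (m : nat) (i : 'I_m) : 'cV[R]_m := delta_mx i 0.

(* S_j : the matrix with (S(x,y))_j = x^T S_j y, i.e. (S_j)_{ik} = S(e_i,e_k)_j *)
Definition Smat (R : rcfType) (m n q : nat)
  (S : 'cV[R]_m -> 'cV[R]_n -> 'cV[R]_q) (j : 'I_q) : 'M[R]_(m, n) :=
  \matrix_(i < m, k < n) S (evec R i) (evec R k) j 0.

Definition liftS (R : rcfType) (m n q : nat)
  (S : 'cV[R]_m -> 'cV[R]_n -> 'cV[R]_q) (W : 'M[R]_(m, n)) : 'cV[R]_q :=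
  \col_j \tr ((Smat S j)^T *m W).

Definition Nset (R : rcfType) (m n q : nat)
  (S : 'cV[R]_m -> 'cV[R]_n -> 'cV[R]_q) (k : nat) (X : 'M[R]_(m, n)) : Prop :=
  (\rank X <= k)%N /\ liftS S X = 0.

Definition diffset (R : rcfType) (m n : nat) (K' : 'M[R]_(m, n) -> Prop)
  (X : 'M[R]_(m, n)) : Prop :=
  exists X1 X2, K' X1 /\ K' X2 /\ X = X1 - X2.

Definition norm2 (R : rcfType) (m : nat) (u : 'cV[R]_m) : R :=
  Num.sqrt (\sum_i u i 0 ^+ 2).

Definition in_colspace (R : rcfType) (m n : nat) (u : 'cV[R]_m) (X : 'M[R]_(m, n)) : bool :=
  (u^T <= X^T)%MS.
Definition in_rowspace (R : rcfType) (m n : nat) (v : 'cV[R]_n) (X : 'M[R]_(m, n)) : bool :=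
  (v^T <= X)%MS.

Definition rank_opt (R : rcfType) (m n q : nat)
  (S : 'cV[R]_m -> 'cV[R]_n -> 'cV[R]_q) (z : 'cV[R]_q)
  (K' : 'M[R]_(m, n) -> Prop) (W : 'M[R]_(m, n)) : Prop :=
  (liftS S W = z /\ K' W) /\
  forall W', liftS S W' = z -> K' W' -> (\rank W <= \rank W')%N.

Definition unique_rank_opt (R : rcfType) (m n q : nat)
  (S : 'cV[R]_m -> 'cV[R]_n -> 'cV[R]_q) (z : 'cV[R]_q)
  (K' : 'M[R]_(m, n) -> Prop) (M : 'M[R]_(m, n)) : Prop :=
  rank_opt S z K' M /\ forall W, rank_opt S z K' W -> W = M.

(* Main.v *)
Require Import Defs.
From HB Require Import structures.
From mathcomp Require Import all_boot all_order all_algebra.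
Import Order.TTheory GRing.Theory Num.Theory.
Local Open Scope ring_scope.

Lemma liftSB (R : rcfType) (m n q : nat)
  (S : 'cV[R]_m -> 'cV[R]_n -> 'cV[R]_q) (A B : 'M[R]_(m, n)) :
  liftS S (A - B) = liftS S A - liftS S B.
Proof. by apply/matrixP => i j; rewrite !mxE mulmxBr linearB. Qed.

Lemma liftS0 (R : rcfType) (m n q : nat)
  (S : 'cV[R]_m -> 'cV[R]_n -> 'cV[R]_q) : liftS S 0 = 0.
Proof. by apply/matrixP => i j; rewrite !mxE mulmx0 linear0. Qed.

Lemma key (R : fieldType) p r (s : R) (a b : 'cV[R]_p) (c d : 'rV[R]_r) :
  (\rank (s *: (a *m c) - b *m d)%R <= 2)%N /\
  ((1 < \rank (s *: (a *m c) - b *m d)%R)%N -> (c <= s *: (a *m c) - b *m d)%MS).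
Proof.
set X := _ - _.
have eX : X = row_mx (s *: a) (- b) *m col_mx c d.
  by rewrite mul_row_col -scalemxAl mulNmx.
have sX : (X <= col_mx c d)%MS by rewrite eX submxMl.
have rB : (\rank (col_mx c d) <= 2)%N := rank_leq_row _.
split; first exact: leq_trans (mxrankS sX) rB.
move=> r2; have : (col_mx c d <= X)%MS.
  rewrite -(mxrank_leqif_sup sX).2 eqn_leq mxrankS //=.
  exact: leq_trans rB r2.
by rewrite col_mx_sub => /andP[].
Qed.

Lemma nz_of_norm (R : rcfType) (m : nat) (u : 'cV[R]_m) : norm2 u = 1 -> u != 0.
Proof.
move=> nu; apply/eqP => u0; move: nu; rewrite u0 /norm2 big1 ?sqrtr0.
  by move/eqP; rewrite eq_sym oner_eq0.
by move=> i _; rewrite mxE expr2 mulr0.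
Qed.

Theorem theorem2 (R : rcfType) (m n q : nat)
  (S : 'cV[R]_m -> 'cV[R]_n -> 'cV[R]_q)
  (K : 'cV[R]_m * 'cV[R]_n -> Prop) (K' : 'M[R]_(m, n) -> Prop)
  (sigma : R) (u : 'cV[R]_m) (v : 'cV[R]_n) :
  bilinear_map S ->
  (forall W : 'M[R]_(m, n),
     (K' W /\ (\rank W <= 1)%N) <-> exists x y, K (x, y) /\ W = x *m y^T) ->
  (forall X : 'M[R]_(m, n), (Nset S 1 X /\ diffset K' X) <-> X = 0) ->
  0 < sigma -> norm2 u = 1 -> norm2 v = 1 ->
  K' (sigma *: (u *m v^T)) ->
  (forall X : 'M[R]_(m, n), Nset S 2 X -> diffset K' X -> X != 0 ->
     ~~ in_colspace u X \/ ~~ in_rowspace v X) ->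
  unique_rank_opt S (liftS S (sigma *: (u *m v^T))) K' (sigma *: (u *m v^T)).
Proof.
move=> _ HK HN1 sp nu nv KM Hcr.
set M := sigma *: (u *m v^T).
have rM : (\rank M <= 1)%N.
  rewrite /M (eqmx_scale _ (lt0r_neq0 sp)).
  exact: leq_trans (mxrankM_maxl _ _) (rank_leq_col _).
have M0 : M != 0.
  have /matrix0Pn [i [k ui]] := nz_of_norm _ _ _ nu.
  have /matrix0Pn [j [l vj]] := nz_of_norm _ _ _ nv.
  apply/matrix0Pn; exists i, j.
  rewrite !mxE big_ord1 !mxE (ord1 k) (ord1 l) in ui vj *.
  apply: mulf_neq0; first exact: lt0r_neq0.
  by apply: mulf_neq0.
have opt : rank_opt S (liftS S M) K' M.
  split=> // W' HW' KW'.
  have [W'0|W'n] := eqVneq W' 0.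
    exfalso; move/eqP: M0; apply; apply/(HN1 M); split.
      by split=> //; rewrite -HW' W'0 liftS0.
    by exists M, W'; do 2!split=> //; rewrite W'0 subr0.
  by apply: leq_trans rM _; rewrite lt0n mxrank_eq0.
split=> // W [[HW KW] Hopt].
have rW := Hopt M (erefl _) KM.
have [x [y [_ EW]]] := (HK W).1 (conj KW (leq_trans rW rM)).
have LX : liftS S (M - W) = 0 by rewrite liftSB HW subrr.
have DX : diffset K' (M - W) by exists M, W.
have [r1|r2] := leqP (\rank (M - W)) 1.
  have : M - W = 0 by apply/HN1.
  by move/eqP; rewrite subr_eq0 => /eqP.
have eX : M - W = sigma *: (u *m v^T) - x *m y^T by rewrite EW.
have [r2' rowv] := key _ _ _ sigma u x v^T y^T.
rewrite -eX in r2' rowv.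
have eXt : (M - W)^T = sigma *: (v *m u^T) - y *m x^T.
  by rewrite eX linearB linearZ /= !trmx_mul !trmxK.
have [_ colu] := key _ _ _ sigma v y u^T x^T.
rewrite -eXt mxrank_tr in colu.
have Xn : M - W != 0 by rewrite -mxrank_eq0 -lt0n (ltn_trans _ r2).
have [] := Hcr (M - W) (conj r2' LX) DX Xn.
  by rewrite /in_colspace colu.
by rewrite /in_rowspace rowv.
Qed.
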